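(* Let $G$ be a basic graph with no induced $P_7$, $C_4$, $C_6$ or $C_7$, and let $H=(B_1,\dots,B_5)$ be a maximal nice blowup of $C_5$ in $G$. Then every vertex of $V(G)\setminus V(H)$ has a neighbor in $V(H)$ (i.e. $A_0=\emptyset$).
   Context: Indices modulo $5$. A nice blowup of $C_5$ is a tuple $(B_1,\dots,B_5)$ of pairwise disjoint cliques of $G$ such that every vertex of $B_i$ has a neighbor in $B_{i-1}$ and in $B_{i+1}$, $B_i$ is anticomplete to $B_{i+2}$, and there are no $a\in B_i$, distinct $b,c\in B_{i+1}$, $d\in B_{i+2}$ with $G[\{a,b,c,d\}]\cong P_4$; $V(H)=\bigcup B_i$; it is maximal if no nice blowup has vertex set strictly containing $V(H)$. $A_0$ is the set of vertices outside $V(H)$ with no neighbor in $V(H)$. For positive integers $p,q$, an induced subgraph $F$ of $G$ is $(p,q)$-good if every maximal clique $K$ of $G$ contains at least $p-(\omega(G)-|K|)$ vertices of $F$ and $F$ is $q$-colorable. A clique cutset is a clique whose removal disconnects the (connected) graph. A vertex $v$ is small if $\deg(v)\le \lceil 5\omega(G)/4\rceil-1$. $G$ is basic if it is connected and has no $(4,5)$-good subgraph, no $(1,1)$-good subgraph, no clique cutset, and no small vertex. *)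

(* Defs.v *)
From mathcomp Require Import all_boot.
Set Implicit Arguments. Unset Strict Implicit. Unset Printing Implicit Defensive.

Section Graphs.
Variables (T : finType) (e : rel T).

Definition simple_graph := irreflexive e /\ symmetric e.

Definition path_adj (n : nat) (i j : 'I_n) : bool :=
  (i.+1 == j :> nat) || (j.+1 == i :> nat).
Definition cycle_adj (n : nat) (i j : 'I_n) : bool :=
  (i.+1 %% n == j :> nat) || (j.+1 %% n == i :> nat).

Definition has_induced (n : nat) (h : rel 'I_n) : Prop :=
  exists f : 'I_n -> T, injective f /\ forall i j, e (f i) (f j) = h i j.

Definition induced_iso_on (S : {set T}) (n : nat) (h : rel 'I_n) : Prop :=
  exists f : 'I_n -> T, [/\ injective f, f @: setT = S &
                            forall i j, e (f i) (f j) = h i j].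

Definition is_clique (K : {set T}) : bool :=
  [forall x in K, forall y in K, (x != y) ==> e x y].

Definition maximal_clique (K : {set T}) : bool :=
  is_clique K && [forall K' : {set T}, (is_clique K' && (K \subset K')) ==> (K' == K)].

Definition omega : nat := \max_(K : {set T} | is_clique K) #|K|.

Definition colorable (S : {set T}) (q : nat) : Prop :=
  exists c : T -> 'I_q, forall x y, x \in S -> y \in S -> e x y -> c x != c y.

Definition good (p q : nat) (S : {set T}) : Prop :=
  (forall K : {set T}, maximal_clique K -> p - (omega - #|K|) <= #|K :&: S|)
  /\ colorable S q.

Definition connected : Prop := forall u v : T, connect e u v.

Definition clique_cutset (C : {set T}) : Prop :=
  is_clique C /\
  exists u v : T, [/\ u \notin C, v \notin C &
     ~~ connect [rel x y | e x y && (x \notin C) && (y \notin C)] u v].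

Definition degree (v : T) : nat := #|[set u | e v u]|.

(* deg v <= ceil(5 omega / 4) - 1, i.e. deg v < ceil(5 omega/4) *)
Definition small (v : T) : bool := degree v < (5 * omega + 3) %/ 4.

Definition basic : Prop :=
  [/\ connected,
      ~ (exists S, good 4 5 S),
      ~ (exists S, good 1 1 S),
      ~ (exists C, clique_cutset C) &
      forall v, ~~ small v].

Definition nxt (i : 'I_5) : 'I_5 := ordS i.
Definition prv (i : 'I_5) : 'I_5 := ord_pred i.

Definition blowup_vertices (B : 'I_5 -> {set T}) : {set T} :=
  \bigcup_(i < 5) B i.

Definition nice_blowup (B : 'I_5 -> {set T}) : Prop :=
  (forall i j : 'I_5, i != j -> [disjoint B i & B j]) /\
  (forall i, is_clique (B i)) /\
  (forall i, B i != set0) /\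
  (forall i x, x \in B i ->
      (exists2 y, y \in B (prv i) & e x y) /\ (exists2 y, y \in B (nxt i) & e x y)) /\
  (forall i x y, x \in B i -> y \in B (nxt (nxt i)) -> ~~ e x y) /\
  (forall i a b c d, a \in B i -> b \in B (nxt i) -> c \in B (nxt i) ->
      d \in B (nxt (nxt i)) -> b != c ->
      ~ induced_iso_on [set a; b; c; d] (@path_adj 4)).

Definition maximal_nice_blowup (B : 'I_5 -> {set T}) : Prop :=
  nice_blowup B /\
  ~ (exists B' : 'I_5 -> {set T},
       nice_blowup B' /\ blowup_vertices B \proper blowup_vertices B').

End Graphs.

(* Main.v *)
Require Import Defs.
From mathcomp Require Import all_boot zify.
Set Implicit Arguments. Unset Strict Implicit. Unset Printing Implicit Defensive.



Definition pathn (a b : nat) : bool := (a.+1 == b) || (b.+1 == a).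
Definition cyclen (n a b : nat) : bool := (a.+1 %% n == b) || (b.+1 %% n == a).

Definition rows_dist (k : nat) (h : nat -> nat -> bool) : bool :=
  all (fun a => all (fun b => (a == b) || h a b ||
      has (fun l => h a l != h b l) (iota 0 k)) (iota 0 k)) (iota 0 k).

Section Gen.
Variables (T : finType) (e : rel T).
Hypothesis irr : irreflexive e.
Hypothesis esym : symmetric e.

Lemma ind_of_fun k (h : rel 'I_k) (hn : nat -> nat -> bool) (f : 'I_k -> T) :
  (forall i j : 'I_k, h i j = hn i j) -> rows_dist k hn ->
  (forall i j, e (f i) (f j) = h i j) -> has_induced e h.
Proof.
move=> hh /allP rd hf; exists f; split => // i j fij.
apply/eqP/negPn/negP => nij.
have := rd i; rewrite mem_iota ltn_ord => /(_ isT) /allP /(_ j).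
rewrite mem_iota ltn_ord => /(_ isT).
have nij' : (i : nat) != j by [].
rewrite (negbTE nij') /= => /orP [].
- by rewrite -hh -hf fij irr.
- case/hasP => l; rewrite mem_iota add0n => lk.
  have -> : l = Ordinal lk by [].
  by rewrite -!hh -!hf fij eqxx.
Qed.

Ltac ce := first [ reflexivity | assumption | (rewrite esym; assumption)
  | (apply/negbTE; assumption) | (rewrite esym; apply/negbTE; assumption)
  | exact: irr | (rewrite esym; reflexivity) ].

Lemma P7_of (a0 a1 a2 a3 a4 a5 a6 : T) :
  e a0 a1 -> e a1 a2 -> e a2 a3 -> e a3 a4 -> e a4 a5 -> e a5 a6 ->
  ~~ e a0 a2 -> ~~ e a0 a3 -> ~~ e a0 a4 -> ~~ e a0 a5 -> ~~ e a0 a6 ->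
  ~~ e a1 a3 -> ~~ e a1 a4 -> ~~ e a1 a5 -> ~~ e a1 a6 ->
  ~~ e a2 a4 -> ~~ e a2 a5 -> ~~ e a2 a6 ->
  ~~ e a3 a5 -> ~~ e a3 a6 -> ~~ e a4 a6 -> has_induced e (@path_adj 7).
Proof.
move=> *; apply: (@ind_of_fun _ _ pathn (fun i => nth a0 [:: a0; a1; a2; a3; a4; a5; a6] i)) => //.
move=> [[|[|[|[|[|[|[|m]]]]]]] Hm] [[|[|[|[|[|[|[|m']]]]]]] Hm'] //=; rewrite /path_adj /=; ce.
Qed.

Lemma C6_of (a0 a1 a2 a3 a4 a5 : T) :
  e a0 a1 -> e a1 a2 -> e a2 a3 -> e a3 a4 -> e a4 a5 -> e a5 a0 ->
  ~~ e a0 a2 -> ~~ e a0 a3 -> ~~ e a0 a4 ->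
  ~~ e a1 a3 -> ~~ e a1 a4 -> ~~ e a1 a5 ->
  ~~ e a2 a4 -> ~~ e a2 a5 -> ~~ e a3 a5 -> has_induced e (@cycle_adj 6).
Proof.
move=> *; apply: (@ind_of_fun _ _ (cyclen 6) (fun i => nth a0 [:: a0; a1; a2; a3; a4; a5] i)) => //.
move=> [[|[|[|[|[|[|m]]]]]] Hm] [[|[|[|[|[|[|m']]]]]] Hm'] //=; rewrite /cycle_adj /=; ce.
Qed.

Lemma C7_of (a0 a1 a2 a3 a4 a5 a6 : T) :
  e a0 a1 -> e a1 a2 -> e a2 a3 -> e a3 a4 -> e a4 a5 -> e a5 a6 -> e a6 a0 ->
  ~~ e a0 a2 -> ~~ e a0 a3 -> ~~ e a0 a4 -> ~~ e a0 a5 ->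
  ~~ e a1 a3 -> ~~ e a1 a4 -> ~~ e a1 a5 -> ~~ e a1 a6 ->
  ~~ e a2 a4 -> ~~ e a2 a5 -> ~~ e a2 a6 ->
  ~~ e a3 a5 -> ~~ e a3 a6 -> ~~ e a4 a6 -> has_induced e (@cycle_adj 7).
Proof.
move=> *; apply: (@ind_of_fun _ _ (cyclen 7) (fun i => nth a0 [:: a0; a1; a2; a3; a4; a5; a6] i)) => //.
move=> [[|[|[|[|[|[|[|m]]]]]]] Hm] [[|[|[|[|[|[|[|m']]]]]]] Hm'] //=; rewrite /cycle_adj /=; ce.
Qed.

Lemma C4_of (a0 a1 a2 a3 : T) :
  e a0 a1 -> e a1 a2 -> e a2 a3 -> e a3 a0 ->
  ~~ e a0 a2 -> ~~ e a1 a3 -> a0 != a2 -> a1 != a3 -> has_induced e (@cycle_adj 4).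
Proof.
move=> e01 e12 e23 e30 n02 n13 d02 d13.
exists (fun i : 'I_4 => nth a0 [:: a0; a1; a2; a3] i); split.
- have d01 : a0 != a1 by apply: contraTneq e01 => ->; rewrite irr.
  have d12 : a1 != a2 by apply: contraTneq e12 => ->; rewrite irr.
  have d23 : a2 != a3 by apply: contraTneq e23 => ->; rewrite irr.
  have d03 : a0 != a3 by apply: contraTneq e30 => ->; rewrite irr.
  move=> [[|[|[|[|m]]]] Hm] [[|[|[|[|m']]]] Hm'] //= E; try (by apply: val_inj); exfalso;
  subst; by move: d01 d12 d23 d03 d02 d13; rewrite ?eqxx.
- move=> [[|[|[|[|m]]]] Hm] [[|[|[|[|m']]]] Hm'] //=; rewrite /cycle_adj /=; ce.
Qed.

End Gen.


Fixpoint lhas (A : Type) (a : A -> bool) (s : seq A) : bool :=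
  if s is x :: s' then (if a x then true else lhas a s') else false.
Fixpoint lall (A : Type) (a : A -> bool) (s : seq A) : bool :=
  if s is x :: s' then (if a x then lall a s' else false) else true.
Lemma lhasE A (a : A -> bool) s : lhas a s = has a s.
Proof. by elim: s => //= x s ->; case: (a x). Qed.
Lemma lallE A (a : A -> bool) s : lall a s = all a s.
Proof. by elim: s => //= x s ->; case: (a x). Qed.

Section Search.
Variable (n : nat) (M : nat -> nat -> bool).
Definition ext_ok (p : seq nat) (w : nat) : bool :=
  if w \in p then false else
  (if p is u :: q then (if M u w then lall (fun v => ~~ M v w) q else false) else true).
Fixpoint ipaths (k : nat) : seq (seq nat) :=
  if k is k'.+1 then flatten [seq [seq w :: p | w <- iota 0 n & ext_ok p w] | p <- ipaths k']
  else [:: [::]].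
Definition icand (ps : seq (seq nat)) : seq (seq nat) :=
  flatten [seq [seq w :: p | w <- iota 0 n] | p <- ps].
Definition is_ind (k : nat) (h : nat -> nat -> bool) (p : seq nat) : bool :=
  if (size p == k) then if uniq p then if lall (fun a => a < n) p then
  lall (fun a => lall (fun b => M (nth 0 p a) (nth 0 p b) == h a b) (iota 0 k)) (iota 0 k)
  else false else false else false.
Definition forb_b : bool :=
  let p3 := ipaths 3 in let p5 := ipaths 5 in let p6 := ipaths 6 in
  if lhas (is_ind 4 (cyclen 4)) (icand p3) then true else
  if lhas (is_ind 6 (cyclen 6)) (icand p5) then true else
  if lhas (is_ind 7 (cyclen 7)) (icand p6) then true else
  lhas (is_ind 7 pathn) (icand p6).
End Search.

Section Gen2.
Variables (T : finType) (e : rel T).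

Lemma ind_of_is_ind n M (s : seq T) x0 k (hk : rel 'I_k) (hn : nat -> nat -> bool) p :
  size s = n -> uniq s ->
  (forall a b, a < n -> b < n -> e (nth x0 s a) (nth x0 s b) = M a b) ->
  (forall i j : 'I_k, hk i j = hn i j) -> is_ind n M k hn p -> has_induced e hk.
Proof.
move=> sz us hM hh; rewrite /is_ind.
case: eqP => // szp; case: ifP => // up; rewrite lallE; case: ifP => // /allP pn.
rewrite lallE => /allP ch.
exists (fun i : 'I_k => nth x0 s (nth 0 p i)); split.
- move=> i j /eqP; rewrite nth_uniq ?sz ?pn ?mem_nth ?szp // => /eqP.
  by move/eqP; rewrite nth_uniq ?szp // => /eqP /val_inj.
- move=> i j; rewrite hM ?pn ?mem_nth ?szp // hh.
  have := ch i; rewrite mem_iota ltn_ord => /(_ isT); rewrite lallE => /allP /(_ j).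
  by rewrite mem_iota ltn_ord => /(_ isT) /eqP.
Qed.

Lemma transfer n M (s : seq T) x0 :
  size s = n -> uniq s ->
  (forall a b, a < n -> b < n -> e (nth x0 s a) (nth x0 s b) = M a b) ->
  forb_b n M ->
  ~ has_induced e (@path_adj 7) -> ~ has_induced e (@cycle_adj 4) ->
  ~ has_induced e (@cycle_adj 6) -> ~ has_induced e (@cycle_adj 7) -> False.
Proof.
move=> sz us hM; rewrite /forb_b !lhasE.
case: ifP => [/hasP [p _ hp] _ n7 n4|_]; first by move=> *; apply: n4; apply: (ind_of_is_ind sz us hM _ hp).
case: ifP => [/hasP [p _ hp] _ n7 n4 n6|_]; first by move=> *; apply: n6; apply: (ind_of_is_ind sz us hM _ hp).
case: ifP => [/hasP [p _ hp] _ n7 n4 n6 nc7|_]; first by apply: nc7; apply: (ind_of_is_ind sz us hM _ hp).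
move=> /hasP [p _ hp] n7 *; by apply: n7; apply: (ind_of_is_ind sz us hM _ hp).

Qed.
End Gen2.

Definition adj8 (bx yy : seq bool) (a b : nat) : bool :=
  if b < 5 then (b == a.+1) || ((a == 0) && (b == 4))
  else if b == 5 then (if a < 5 then nth false bx a else false)
  else if b == 6 then (if a < 5 then nth false yy a else false)
  else if b == 7 then (a == 5) || (a == 6) else false.
Definition M8 bx yy (a b : nat) : bool :=
  if a < b then adj8 bx yy a b else if b < a then adj8 bx yy b a else false.
Fixpoint bits (k : nat) : seq (seq bool) :=
  if k is k'.+1 then [seq b :: l | b <- [:: true; false], l <- bits k'] else [:: [::]].
Definition bits5 := bits 5.
Definition disj (bx yy : seq bool) := all (fun i => ~~ (nth false bx i && nth false yy i)) (iota 0 5).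
Definition allowed (bx yy : seq bool) : bool :=
  [|| (bx == [:: false; false; false; false; false]) && (yy \in
     [:: [:: false;false;false;false;false]; [:: false;false;true;true;true]; [:: false;true;true;true;false];
         [:: true;false;false;true;true]; [:: true;true;false;false;true]; [:: true;true;true;false;false];
         [:: true;true;true;true;true]]),
      (yy == [:: false; false; false; false; false]) && (bx \in
     [:: [:: false;false;true;true;true]; [:: false;true;true;true;false];
         [:: true;false;false;true;true]; [:: true;true;false;false;true]; [:: true;true;true;false;false];
         [:: true;true;true;true;true]]) |
      (bx, yy) \in [:: ([:: false; false; false; true; true], [:: true; true; true; false; false]);
                      ([:: false; false; true; true; false], [:: true; true; false; false; true]);
                      ([:: false; false; true; true; true], [:: true; true; false; false; false]);
                      ([:: false; true; true; false; false], [:: true; false; false; true; true]);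
                      ([:: false; true; true; true; false], [:: true; false; false; false; true]);
                      ([:: true; false; false; false; true], [:: false; true; true; true; false]);
                      ([:: true; false; false; true; true], [:: false; true; true; false; false]);
                      ([:: true; true; false; false; false], [:: false; false; true; true; true]);
                      ([:: true; true; false; false; true], [:: false; false; true; true; false]);
                      ([:: true; true; true; false; false], [:: false; false; false; true; true])]].
Lemma TLcomp : lall (fun bx => lall (fun yy => if disj bx yy then if allowed bx yy then true else forb_b 8 (M8 bx yy) else true) bits5) bits5.
Proof. vm_compute. reflexivity. Qed.


Lemma nxt5 (i : 'I_5) : nxt (nxt (nxt (nxt (nxt i)))) = i.
Proof. by case: i => [[|[|[|[|[|?]]]]] ?] //; apply: val_inj. Qed.
Lemma prvE (i : 'I_5) : prv i = nxt (nxt (nxt (nxt i))).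
Proof. by case: i => [[|[|[|[|[|?]]]]] ?] //; apply: val_inj. Qed.
Lemma nxt_ne1 (i : 'I_5) : i != nxt i.
Proof. by case: i => [[|[|[|[|[|?]]]]] ?]. Qed.
Lemma nxt_ne2 (i : 'I_5) : i != nxt (nxt i).
Proof. by case: i => [[|[|[|[|[|?]]]]] ?]. Qed.
Lemma nxt_ne3 (i : 'I_5) : i != nxt (nxt (nxt i)).
Proof. by case: i => [[|[|[|[|[|?]]]]] ?]. Qed.
Lemma nxt_ne4 (i : 'I_5) : i != nxt (nxt (nxt (nxt i))).
Proof. by case: i => [[|[|[|[|[|?]]]]] ?]. Qed.
Lemma five_cases (i k : 'I_5) :
  [|| k == i, k == nxt i, k == nxt (nxt i), k == nxt (nxt (nxt i)) | k == nxt (nxt (nxt (nxt i)))].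
Proof. by case: i => [[|[|[|[|[|?]]]]] ?]; case: k => [[|[|[|[|[|?]]]]] ?]. Qed.


Definition adj9 (bx yy : seq bool) (a b : nat) : bool :=
  if b < 5 then (b == a.+1) || ((a == 0) && (b == 4))
  else if b == 5 then (if a < 5 then nth false bx a else false)
  else if b == 6 then (if a < 5 then nth false yy a else false)
  else if b == 7 then (a == 5)
  else if b == 8 then (a == 6) || (a == 7) else false.
Definition M9 bx yy (a b : nat) : bool :=
  if a < b then adj9 bx yy a b else if b < a then adj9 bx yy b a else false.
Lemma CAcomp : lall (fun bx => lall (fun yy => forb_b 9 (M9 (true :: bx) (true :: yy))) (bits 4)) (bits 4).
Proof. vm_compute. reflexivity. Qed.

Lemma mem_bits k l : size l = k -> l \in bits k.
Proof.
elim: k l => [|k IH] [|b l] // [sz].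
have : l \in bits k by apply: IH.
by case: b => H /=; rewrite !mem_cat; apply/orP; [left|right; rewrite orbF]; apply/mapP; exists l.
Qed.

Section Main.
Variables (T : finType) (e : rel T) (B : 'I_5 -> {set T}).
Hypothesis irr : irreflexive e.
Hypothesis esym : symmetric e.
Hypothesis nb : nice_blowup e B.
Hypothesis n7 : ~ has_induced e (@path_adj 7).
Hypothesis n4 : ~ has_induced e (@cycle_adj 4).
Hypothesis n6 : ~ has_induced e (@cycle_adj 6).
Hypothesis nc7 : ~ has_induced e (@cycle_adj 7).
Hypothesis mx : ~ (exists B' : 'I_5 -> {set T}, nice_blowup e B' /\ blowup_vertices B \proper blowup_vertices B').
Local Notation H := (blowup_vertices B).

Lemma inH u i : u \in B i -> u \in H.
Proof. by move=> ui; apply/bigcupP; exists i. Qed.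
Lemma HP u : u \in H -> exists i, u \in B i.
Proof. by case/bigcupP => i _ ui; exists i. Qed.
Lemma Bdiff u w i k : u \in B i -> w \in B k -> i != k -> u != w.
Proof.
case: nb => dis _ ui wk ik; apply/eqP => E; subst w.
by move: (dis i k ik) => /disjoint_setI0 /setP /(_ u); rewrite !inE ui wk.
Qed.
Lemma Bcl u w i : u \in B i -> w \in B i -> u != w -> e u w.
Proof.
case: nb => _ [cl _] ui wi uw.
by move: (cl i) => /forallP /(_ u) /implyP /(_ ui) /forallP /(_ w) /implyP /(_ wi) /implyP /(_ uw).
Qed.
Lemma Banti u w i : u \in B i -> w \in B (nxt (nxt i)) -> ~~ e u w.
Proof. by case: nb => _ [_ [_ [_ [an _]]]]; apply: an. Qed.
Lemma BnbN u i : u \in B i -> exists2 w, w \in B (nxt i) & e u w.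
Proof. by case: nb => _ [_ [_ [nbh _]]] /nbh []. Qed.
Lemma BnbP u i : u \in B i -> exists2 w, w \in B (prv i) & e u w.
Proof. by case: nb => _ [_ [_ [nbh _]]] /nbh []. Qed.
Lemma Bne i : exists u, u \in B i.
Proof. by case: nb => _ [_ [ne _]]; move: (ne i) => /set0Pn. Qed.
Lemma notH_neq x u i : x \notin H -> u \in B i -> x != u.
Proof. by move=> xH ui; apply: contraNneq xH => ->; apply: inH ui. Qed.

Lemma mkP4 a b c d : e a b -> e b c -> e c d -> ~~ e a c -> ~~ e b d -> ~~ e a d ->
  a != c -> b != d -> a != d ->
  induced_iso_on e [set a; b; c; d] (@path_adj 4).
Proof.
move=> eab ebc ecd nac nbd nad nac' nbd' nad'.
have nab : a != b by apply: contraTneq eab => ->; rewrite irr.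
have nbc : b != c by apply: contraTneq ebc => ->; rewrite irr.
have ncd : c != d by apply: contraTneq ecd => ->; rewrite irr.
exists (fun i : 'I_4 => nth a [:: a; b; c; d] i); split.
- move=> [[|[|[|[|m]]]] Hm] [[|[|[|[|m']]]] Hm'] //= E; try (by apply: val_inj); exfalso;
  subst; by move: nab nbc ncd nac' nbd' nad'; rewrite ?eqxx.
- apply/setP => v; rewrite !inE; apply/imsetP/idP.
  + case=> [[[|[|[|[|m]]]] Hm] _ ->] //=; by rewrite eqxx ?orbT.
  + rewrite -!orbA; case/or4P => /eqP ->.
    * by exists (Ordinal (isT : 0 < 4)).
    * by exists (Ordinal (isT : 1 < 4)).
    * by exists (Ordinal (isT : 2 < 4)).
    * by exists (Ordinal (isT : 3 < 4)).
- move=> [[|[|[|[|m]]]] Hm] [[|[|[|[|m']]]] Hm'] //=; rewrite /path_adj /= ?irr //;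
  first [ reflexivity | assumption | (rewrite esym; assumption)
  | (apply/negbTE; assumption) | (rewrite esym; apply/negbTE; assumption) ].
Qed.

Lemma Bnice a b c d i : a \in B i -> b \in B (nxt i) -> c \in B (nxt i) ->
  d \in B (nxt (nxt i)) -> b != c -> e a b -> e c d -> e a c || e b d.
Proof.
move=> ai bi ci di bc eab ecd; apply/orP.
case: (boolP (e a c)) => [?|nac]; first by left.
case: (boolP (e b d)) => [?|nbd]; first by right.
exfalso.
case: nb => _ [_ [_ [_ [_ nc]]]]; apply: (nc i a b c d) => //.
apply: mkP4 => //; first exact: (Bcl bi ci bc).
- exact: (Banti ai di).
- exact: (Bdiff ai ci (nxt_ne1 i)).
- exact: (Bdiff bi di (nxt_ne1 _)).
- exact: (Bdiff ai di (nxt_ne2 i)).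
Qed.

Lemma MID b d i : b \in B i -> d \in B (nxt (nxt i)) ->
  exists2 c, c \in B (nxt i) & e b c && e c d.
Proof.
move=> bi di; have [c ci ebc] := BnbN bi.
have [c' ci' edc'] := BnbP di; rewrite prvE !nxt5 in ci'.
case: (eqVneq c c') => [E|cc'].
  by subst c'; exists c => //; rewrite ebc esym.
case ecd: (e c d); first by exists c; rewrite ?ebc.
case ebc': (e b c'); first by exists c' => //; rewrite ebc' esym.
have := Bnice bi ci ci' di cc' ebc; rewrite esym edc' => /(_ isT).
by rewrite ebc' ecd.
Qed.

Lemma LW b d i : b \in B i -> d \in B (nxt (nxt i)) ->
  exists ee f, [/\ ee \in B (nxt (nxt (nxt i))), f \in B (nxt (nxt (nxt (nxt i)))),
     e d ee, e ee f & e f b].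
Proof.
move=> bi di; have [f fi ebf] := BnbP bi; rewrite prvE in fi.
have [e' ei' efe'] := BnbP fi; rewrite prvE !nxt5 in ei'.
have [ee ei ede] := BnbN di.
case: (eqVneq ee e') => [E|ee'].
  by subst e'; exists ee, f; split; rewrite // esym.
case eef: (e ee f); first by exists ee, f; split; rewrite // esym.
have := Bnice di ei ei' fi ee' ede; rewrite esym efe' eef orbF => /(_ isT) ede'.
by exists e', f; split; rewrite // esym.
Qed.

Lemma C5thru b b' i : b \in B i -> b' \in B (nxt i) -> e b b' ->
  exists c2 c3 c4, [/\ c2 \in B (nxt (nxt i)), c3 \in B (nxt (nxt (nxt i))),
     c4 \in B (nxt (nxt (nxt (nxt i)))), e b' c2 & e c2 c3 && e c3 c4 && e c4 b].
Proof.
move=> bi bi' ebb; have [c2 c2i e2] := BnbN bi'.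
have [c3 [c4 [c3i c4i e23 e34 e4b]]] := LW bi c2i.
by exists c2, c3, c4; split; rewrite // e23 e34 e4b.
Qed.

Lemma mu' (a b : T) : a != b -> b != a. Proof. by rewrite eq_sym. Qed.
Lemma diam u w : u \in H -> w \in H ->
  [\/ u = w, e u w | exists2 m, m \in H & e u m && e m w].
Proof.
move=> /HP [i ui] /HP [k wk].
case/orP: (five_cases i k) => [/eqP E|/orP [/eqP E|/orP [/eqP E|/orP [/eqP E| /eqP E]]]];
  subst k.
- case: (eqVneq u w) => [->|nuw]; first by constructor 1.
  by constructor 2; exact: (Bcl ui wk nuw).
- have [m mi eum] := BnbN ui.
  case: (eqVneq m w) => [E|mw]; first by subst; constructor 2.
  by constructor 3; exists m; rewrite ?(inH mi) // eum (Bcl mi wk mw).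
- have [m mi /andP [e1 e2]] := MID ui wk.
  by constructor 3; exists m; rewrite ?(inH mi) // e1 e2.
- have ui' : u \in B (nxt (nxt (nxt (nxt (nxt i))))) by rewrite nxt5.
  have [m mi /andP [e1 e2]] := MID wk ui'.
  by constructor 3; exists m; rewrite ?(inH mi) // esym e2 esym e1.
- have [m mi ewm] := BnbN wk; rewrite nxt5 in mi.
  case: (eqVneq m u) => [E|mu]; first by subst; constructor 2; rewrite esym.
  by constructor 3; exists m; rewrite ?(inH mi) // (Bcl ui mi (mu' mu)) esym ewm.
Qed.

Ltac ce := first [ reflexivity | assumption | (rewrite esym; assumption)
  | (apply/negbTE; assumption) | (rewrite esym; apply/negbTE; assumption)
  | exact: irr | (rewrite esym; reflexivity) ].
Ltac ne := first [ assumption | (rewrite eq_sym; assumption) ].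

Lemma neq_of_e a b : e a b -> a != b.
Proof. by apply: contraTneq => ->; rewrite irr. Qed.

Record cfgB (x y z : T) : Prop := CfgB {
  cx : x \notin H; cy : y \notin H; cz : z \notin H;
  zH : forall h, h \in H -> ~~ e z h;
  ezx : e z x; ezy : e z y; nxy : ~~ e x y; dxy : x != y;
  nco : forall h, h \in H -> ~~ (e x h && e y h) }.

Lemma cfgB_sym x y z : cfgB x y z -> cfgB y x z.
Proof.
case=> *; constructor => //; first by rewrite esym.
- by rewrite eq_sym.
- by move=> h hH; rewrite andbC; auto.
Qed.

Lemma TL x y z k c0 c1 c2 c3 c4 : cfgB x y z ->
  c0 \in B k -> c1 \in B (nxt k) -> c2 \in B (nxt (nxt k)) ->
  c3 \in B (nxt (nxt (nxt k))) -> c4 \in B (nxt (nxt (nxt (nxt k)))) ->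
  e c0 c1 -> e c1 c2 -> e c2 c3 -> e c3 c4 -> e c4 c0 ->
  allowed [:: e x c0; e x c1; e x c2; e x c3; e x c4] [:: e y c0; e y c1; e y c2; e y c3; e y c4].
Proof.
move=> cf k0 k1 k2 k3 k4 e01 e12 e23 e34 e40.
case: cf => cx cy cz zH ezx ezy nxy dxy nco.
case: (boolP (allowed _ _)) => // nal; exfalso.
have := TLcomp; rewrite lallE => /allP /(_ _ (@mem_bits 5 [:: e x c0; e x c1; e x c2; e x c3; e x c4] erefl)).
rewrite lallE => /allP /(_ _ (@mem_bits 5 [:: e y c0; e y c1; e y c2; e y c3; e y c4] erefl)).
have -> : disj [:: e x c0; e x c1; e x c2; e x c3; e x c4] [:: e y c0; e y c1; e y c2; e y c3; e y c4].
  by rewrite /disj /= (nco _ (inH k0)) (nco _ (inH k1)) (nco _ (inH k2)) (nco _ (inH k3)) (nco _ (inH k4)).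
rewrite (negbTE nal) => fb.
have n02 := Banti k0 k2. have n13 := Banti k1 k3. have n24 := Banti k2 k4.
have k0' : c0 \in B (nxt (nxt (nxt (nxt (nxt k))))) by rewrite nxt5.
have k1' : c1 \in B (nxt (nxt (nxt (nxt (nxt (nxt k)))))) by rewrite nxt5.
have n30 := Banti k3 k0'. have n41 := Banti k4 k1'.
have z0 := zH _ (inH k0). have z1 := zH _ (inH k1). have z2 := zH _ (inH k2).
have z3 := zH _ (inH k3). have z4 := zH _ (inH k4).
have d01 := Bdiff k0 k1 (nxt_ne1 _). have d02 := Bdiff k0 k2 (nxt_ne2 _).
have d03 := Bdiff k0 k3 (nxt_ne3 _). have d04 := Bdiff k0 k4 (nxt_ne4 _).
have d12 := Bdiff k1 k2 (nxt_ne1 _). have d13 := Bdiff k1 k3 (nxt_ne2 _).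
have d14 := Bdiff k1 k4 (nxt_ne3 _). have d23 := Bdiff k2 k3 (nxt_ne1 _).
have d24 := Bdiff k2 k4 (nxt_ne2 _). have d34 := Bdiff k3 k4 (nxt_ne1 _).
have x0 := notH_neq cx k0. have x1 := notH_neq cx k1. have x2 := notH_neq cx k2.
have x3 := notH_neq cx k3. have x4 := notH_neq cx k4.
have y0 := notH_neq cy k0. have y1 := notH_neq cy k1. have y2 := notH_neq cy k2.
have y3 := notH_neq cy k3. have y4 := notH_neq cy k4.
have w0 := notH_neq cz k0. have w1 := notH_neq cz k1. have w2 := notH_neq cz k2.
have w3 := notH_neq cz k3. have w4 := notH_neq cz k4.
have zx := neq_of_e ezx. have zy := neq_of_e ezy.
apply: (@transfer _ e 8 _ [:: c0; c1; c2; c3; c4; x; y; z] c0 erefl _ _ fb n7 n4 n6 nc7).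
- rewrite /= !inE !negb_or; repeat (apply/andP; split) => //; ne.
- move=> [|[|[|[|[|[|[|[|a]]]]]]]] [|[|[|[|[|[|[|[|b]]]]]]]] ha hb //=;
  rewrite /M8 /adj8 /=; ce.
Qed.

Record C5at (k : 'I_5) (c0 c1 c2 c3 c4 : T) : Prop := C5At {
  ck0 : c0 \in B k; ck1 : c1 \in B (nxt k); ck2 : c2 \in B (nxt (nxt k));
  ck3 : c3 \in B (nxt (nxt (nxt k))); ck4 : c4 \in B (nxt (nxt (nxt (nxt k))));
  ce01 : e c0 c1; ce12 : e c1 c2; ce23 : e c2 c3; ce34 : e c3 c4; ce40 : e c4 c0 }.

Lemma C5rot k c0 c1 c2 c3 c4 : C5at k c0 c1 c2 c3 c4 -> C5at (nxt k) c1 c2 c3 c4 c0.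
Proof. by case=> *; constructor; rewrite ?nxt5. Qed.

Lemma C5thru' b b' i : b \in B i -> b' \in B (nxt i) -> e b b' ->
  exists c2 c3 c4, C5at i b b' c2 c3 c4.
Proof.
move=> bi bi' ebb; have [c2 [c3 [c4 [k2 k3 k4 e2 /andP [/andP [e3 e4] e5]]]]] := C5thru bi bi' ebb.
by exists c2, c3, c4; constructor.
Qed.

Lemma TLa x y z k c0 c1 c2 c3 c4 : cfgB x y z -> C5at k c0 c1 c2 c3 c4 ->
  e x c0 -> ~~ e x c1 -> ~~ e x c4 -> False.
Proof.
move=> cf [k0 k1 k2 k3 k4 e01 e12 e23 e34 e40] x0 x1 x4.
move: (TL cf k0 k1 k2 k3 k4 e01 e12 e23 e34 e40).
rewrite x0 (negbTE x1) (negbTE x4).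
by case: (e x c2); case: (e x c3); case: (e y c0); case: (e y c1); case: (e y c2);
  case: (e y c3); case: (e y c4).
Qed.

Lemma TLc x y z k c0 c1 c2 c3 c4 : cfgB x y z -> C5at k c0 c1 c2 c3 c4 ->
  e x c0 -> e y c1 ->
  (e x c4 && e x c3 && e y c2) || (e x c4 && e y c2 && e y c3).
Proof.
move=> cf [k0 k1 k2 k3 k4 e01 e12 e23 e34 e40] x0 y1.
move: (TL cf k0 k1 k2 k3 k4 e01 e12 e23 e34 e40).
rewrite x0 y1.
by case: (e x c1); case: (e x c2); case: (e x c3); case: (e x c4); case: (e y c0);
  case: (e y c2); case: (e y c3); case: (e y c4).
Qed.

Lemma Banti3 u w i : u \in B i -> w \in B (nxt (nxt (nxt i))) -> ~~ e u w.
Proof.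
move=> ui wi; rewrite esym; apply: (Banti wi).
by rewrite nxt5.
Qed.

Ltac nadj := match goal with
  | H1 : is_true (in_mem ?a (@mem _ _ ?P1)), H2 : is_true (in_mem ?b (@mem _ _ ?P2)) |- is_true (~~ e ?a ?b) =>
     first [exact: (Banti H1 H2) | exact: (Banti3 H1 H2)
           | rewrite esym; first [exact: (Banti H2 H1) | exact: (Banti3 H2 H1)]]
  end.
Ltac dist := match goal with
  | H1 : is_true (in_mem ?a (@mem _ _ ?P1)), H2 : is_true (in_mem ?b (@mem _ _ ?P2)) |- is_true (?a != ?b) =>
     first [exact: (Bdiff H1 H2 (nxt_ne1 _)) | exact: (Bdiff H1 H2 (nxt_ne2 _))
           | exact: (Bdiff H1 H2 (nxt_ne3 _)) | exact: (Bdiff H1 H2 (nxt_ne4 _))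
           | rewrite eq_sym; first [exact: (Bdiff H2 H1 (nxt_ne1 _)) | exact: (Bdiff H2 H1 (nxt_ne2 _))
           | exact: (Bdiff H2 H1 (nxt_ne3 _)) | exact: (Bdiff H2 H1 (nxt_ne4 _))]]
  | Hx : is_true (~~ in_mem ?a _), H2 : is_true (in_mem ?b (@mem _ _ ?P2)) |- is_true (?a != ?b) =>
     exact: (notH_neq Hx H2)
  | Hx : is_true (~~ in_mem ?a _), H2 : is_true (in_mem ?b (@mem _ _ ?P2)) |- is_true (?b != ?a) =>
     rewrite eq_sym; exact: (notH_neq Hx H2)
  end.
Ltac memb := rewrite ?nxt5; assumption.
Ltac sol := first [ce | ne | nadj | dist | memb | (apply: neq_of_e; ce)].

Lemma noC4 a0 a1 a2 a3 : e a0 a1 -> e a1 a2 -> e a2 a3 -> e a3 a0 ->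
  ~~ e a0 a2 -> ~~ e a1 a3 -> a0 != a2 -> a1 != a3 -> False.
Proof. by move=> h1 h2 h3 h4 h5 h6 h7 h8; apply: n4; exact: (C4_of irr esym h1 h2 h3 h4 h5 h6 h7 h8). Qed.
Lemma noC6 a0 a1 a2 a3 a4 a5 :
  e a0 a1 -> e a1 a2 -> e a2 a3 -> e a3 a4 -> e a4 a5 -> e a5 a0 ->
  ~~ e a0 a2 -> ~~ e a0 a3 -> ~~ e a0 a4 ->
  ~~ e a1 a3 -> ~~ e a1 a4 -> ~~ e a1 a5 ->
  ~~ e a2 a4 -> ~~ e a2 a5 -> ~~ e a3 a5 -> False.
Proof. by move=> h1 h2 h3 h4 h5 h6 h7 h8 h9 h10 h11 h12 h13 h14 h15; apply: n6; exact: (C6_of irr esym h1 h2 h3 h4 h5 h6 h7 h8 h9 h10 h11 h12 h13 h14 h15). Qed.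
Lemma noC7 a0 a1 a2 a3 a4 a5 a6 :
  e a0 a1 -> e a1 a2 -> e a2 a3 -> e a3 a4 -> e a4 a5 -> e a5 a6 -> e a6 a0 ->
  ~~ e a0 a2 -> ~~ e a0 a3 -> ~~ e a0 a4 -> ~~ e a0 a5 ->
  ~~ e a1 a3 -> ~~ e a1 a4 -> ~~ e a1 a5 -> ~~ e a1 a6 ->
  ~~ e a2 a4 -> ~~ e a2 a5 -> ~~ e a2 a6 ->
  ~~ e a3 a5 -> ~~ e a3 a6 -> ~~ e a4 a6 -> False.
Proof. by move=> h1 h2 h3 h4 h5 h6 h7 h8 h9 h10 h11 h12 h13 h14 h15 h16 h17 h18 h19 h20 h21; apply: nc7; exact: (C7_of irr esym h1 h2 h3 h4 h5 h6 h7 h8 h9 h10 h11 h12 h13 h14 h15 h16 h17 h18 h19 h20 h21). Qed.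
Lemma noP7 a0 a1 a2 a3 a4 a5 a6 :
  e a0 a1 -> e a1 a2 -> e a2 a3 -> e a3 a4 -> e a4 a5 -> e a5 a6 ->
  ~~ e a0 a2 -> ~~ e a0 a3 -> ~~ e a0 a4 -> ~~ e a0 a5 -> ~~ e a0 a6 ->
  ~~ e a1 a3 -> ~~ e a1 a4 -> ~~ e a1 a5 -> ~~ e a1 a6 ->
  ~~ e a2 a4 -> ~~ e a2 a5 -> ~~ e a2 a6 ->
  ~~ e a3 a5 -> ~~ e a3 a6 -> ~~ e a4 a6 -> False.
Proof. by move=> h1 h2 h3 h4 h5 h6 h7 h8 h9 h10 h11 h12 h13 h14 h15 h16 h17 h18 h19 h20 h21; apply: n7; exact: (P7_of irr esym h1 h2 h3 h4 h5 h6 h7 h8 h9 h10 h11 h12 h13 h14 h15 h16 h17 h18 h19 h20 h21). Qed.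

Lemma iso_P4 a b c d : a != b -> a != c -> a != d -> b != c -> b != d -> c != d ->
  induced_iso_on e [set a; b; c; d] (@path_adj 4) -> e b c -> ~~ e a d ->
  (e a b && e c d && ~~ e a c && ~~ e b d) || (e a c && e b d && ~~ e a b && ~~ e c d).
Proof.
move=> dab dac dad dbc dbd dcd [f [injf imf adjf]].
move: dab dac dad dbc dbd dcd.
have mem u : u \in [set a; b; c; d] -> exists i, u = f i.
  by rewrite -imf => /imsetP [i _ ->]; exists i.
have [ia ->] : exists i, a = f i by apply: mem; rewrite !inE eqxx.
have [ib ->] : exists i, b = f i by apply: mem; rewrite !inE eqxx ?orbT.
have [ic ->] : exists i, c = f i by apply: mem; rewrite !inE eqxx ?orbT.
have [id ->] : exists i, d = f i by apply: mem; rewrite !inE eqxx ?orbT.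
rewrite !adjf.
have ne (i k : 'I_4) : f i != f k -> i != k by apply: contra => /eqP ->.
move=> /ne + /ne + /ne + /ne + /ne + /ne.
by case: ia => [[|[|[|[|?]]]] ?]; case: ib => [[|[|[|[|?]]]] ?];
   case: ic => [[|[|[|[|?]]]] ?]; case: id => [[|[|[|[|?]]]] ?].
Qed.

Lemma cliqueI (S : {set T}) : (forall u w, u \in S -> w \in S -> u != w -> e u w) -> is_clique e S.
Proof.
move=> h; apply/forallP => u; apply/implyP => uS; apply/forallP => w; apply/implyP => wS.
by apply/implyP; apply: h.
Qed.

Lemma nxt_eq1 (i k : 'I_5) : nxt i = k -> i = nxt (nxt (nxt (nxt k))).
Proof. by move=> <-; rewrite nxt5. Qed.
Lemma nxt_eq2 (i k : 'I_5) : nxt (nxt i) = k -> i = nxt (nxt (nxt k)).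
Proof. by move=> <-; rewrite nxt5. Qed.

Section Addable.
Variables (x y z : T) (j : 'I_5) (v0 v1 v2 v3 v4 : T).
Hypothesis cf : cfgB x y z.
Hypothesis cv : C5at j v0 v1 v2 v3 v4.
Hypotheses (xv4 : e x v4) (xv0 : e x v0) (xv1 : e x v1) (yv2 : e y v2) (yv3 : e y v3).

Lemma xv2 : ~~ e x v2.
Proof. by case: cf => _ _ _ _ _ _ _ _ nco; move: (nco v2 (inH (ck2 cv))); rewrite yv2 andbT. Qed.
Lemma xv3 : ~~ e x v3.
Proof. by case: cf => _ _ _ _ _ _ _ _ nco; move: (nco v3 (inH (ck3 cv))); rewrite yv3 andbT. Qed.

Lemma step1a p : p \in B (nxt (nxt j)) -> ~~ e x p.
Proof.
move=> pj; apply/negP => exp.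
case: cv => k0 k1 k2 k3 k4 e01 e12 e23 e34 e40.
have cx := cx cf. have x2 := xv2. have x3 := xv3.
have [q qj /andP [epq eqv4]] := MID pj k4.
have exq : e x q.
  apply/negPn/negP => nxq; apply: (noC4 (a0:=x) (a1:=p) (a2:=q) (a3:=v4)); sol.
have pv2 : p != v2 by apply: contraTneq exp => ->.
have qv3 : q != v3 by apply: contraTneq exq => ->.
have epv2 := Bcl pj k2 pv2. have eqv3 := Bcl qj k3 qv3.
have npv3 : ~~ e p v3.
  apply/negP => epv3; apply: (noC4 (a0:=x) (a1:=p) (a2:=v3) (a3:=v4)); sol.
have nqv2 : ~~ e q v2.
  apply/negP => eqv2; apply: (noC4 (a0:=x) (a1:=q) (a2:=v2) (a3:=v1)); sol.
apply: (noC4 (a0:=p) (a1:=q) (a2:=v3) (a3:=v2)); sol.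
Qed.

Lemma step1b p : p \in B (nxt (nxt (nxt j))) -> ~~ e x p.
Proof.
move=> pj; apply/negP => exp.
case: cv => k0 k1 k2 k3 k4 e01 e12 e23 e34 e40.
have cx := cx cf.
have [q qj /andP [e1q eqp]] := MID k1 pj.
have exq : e x q.
  apply/negPn/negP => nxq; apply: (noC4 (a0:=x) (a1:=v1) (a2:=q) (a3:=p)); sol.
by move: (step1a qj); rewrite exq.
Qed.

Lemma step2 w : w \in B j -> e x w.
Proof.
move=> wj; apply/negPn/negP => nxw.
have b2 : forall d, d \in B (nxt j) -> e w d -> ~~ e x d.
  move=> d dj ewd; apply/negP => exd.
  have [c2 [c3 [c4 C]]] := C5thru' wj dj ewd.
  apply: (TLa cf (C5rot C)) => //; first exact: (step1a (ck2 C)).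
have b2' : forall a, a \in B (nxt (nxt (nxt (nxt j)))) -> e a w -> ~~ e x a.
  move=> a aj eaw; apply/negP => exa.
  have wj' : w \in B (nxt (nxt (nxt (nxt (nxt j))))) by rewrite nxt5.
  have [c2 [c3 [c4 C]]] := C5thru' aj wj' eaw.
  apply: (TLa cf C exa nxw); apply: step1b; have := ck4 C; by rewrite ?nxt5.
case: cv => k0 k1 k2 k3 k4 e01 e12 e23 e34 e40.
have nwv1 : ~~ e w v1 by apply/negP => /(b2 _ k1); rewrite xv1.
have nwv4 : ~~ e v4 w by apply/negP => /(b2' _ k4); rewrite xv4.
have [d dj ewd] := BnbN wj.
have [a aj ewa] := BnbP wj; rewrite prvE in aj.
have nxd := b2 d dj ewd.
have nxa : ~~ e x a by apply: b2' => //; rewrite esym.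
have v0w : v0 != w by apply: contraTneq xv0 => ->.
have ev0d : e v0 d.
  have := @Bnice v4 v0 w d (nxt (nxt (nxt (nxt j)))) k4; rewrite !nxt5 => /(_ k0 wj dj v0w e40 ewd).
  by rewrite (negbTE nwv4).
have eav0 : e a v0.
  have := @Bnice a w v0 v1 (nxt (nxt (nxt (nxt j)))) aj; rewrite !nxt5.
  move=> /(_ wj k0 k1 (mu' v0w)); rewrite esym => /(_ ewa e01).
  by rewrite (negbTE nwv1) orbF.
have dj' : d \in B (nxt (nxt (nxt (nxt (nxt (nxt j)))))) by rewrite nxt5.
have [ee [f [eej fj ede eef efa]]] := LW aj dj'.
rewrite !nxt5 in eej fj.
have C : C5at j v0 d ee f a by constructor.
exact: (TLa cf C xv0 nxd nxa).
Qed.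

Lemma N1 b c d : b \in B (nxt j) -> c \in B (nxt j) -> d \in B (nxt (nxt j)) -> b != c ->
  e x b -> e c d -> ~~ e x c -> ~~ e b d -> False.
Proof.
move=> bj cj dj bc exb ecd nxc nbd.
have ebc := Bcl bj cj bc.
have [c2 [c3 [c4 C]]] := C5thru' cj dj ecd.
case: (C) => _ _ k2 k3 k4 _ e2 e3 e4 e5.
rewrite !nxt5 in k4.
have exc4 := step2 k4.
have nxd := step1a dj. have nxc2 := step1b k2.
case: (boolP (e x c3)) => [exc3|nxc3].
- apply: (noC6 (a0:=x) (a1:=b) (a2:=c) (a3:=d) (a4:=c2) (a5:=c3)); sol.
- have C' := C5rot (C5rot (C5rot (C5rot C))).
  exact: (TLa cf C' exc4 nxc nxc3).
Qed.

Lemma N1' a b c : a \in B (nxt (nxt (nxt j))) -> b \in B (nxt (nxt (nxt (nxt j)))) ->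
  c \in B (nxt (nxt (nxt (nxt j)))) -> b != c ->
  e a b -> e c x -> ~~ e a c -> ~~ e b x -> False.
Proof.
move=> aj bj cj bc eab ecx nac nbx.
have ebc := Bcl bj cj bc.
have [g gj ebg] := BnbN bj; rewrite nxt5 in gj.
have gj' : g \in B (nxt (nxt (nxt (nxt (nxt j))))) by rewrite nxt5.
have [ee [f [eej fj ege eef efa]]] := LW aj gj'.
rewrite !nxt5 in eej fj.
have exg := step2 gj.
have nxa := step1b aj. have nxf := step1a fj.
case: (boolP (e x ee)) => [exe|nxe].
- apply: (noC6 (a0:=x) (a1:=c) (a2:=b) (a3:=a) (a4:=f) (a5:=ee)); sol.
- have C : C5at j g ee f a b by constructor => //; rewrite esym.
  by apply: (TLa cf C exg nxe); rewrite esym.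
Qed.

Lemma N2a a c d : a \in B (nxt (nxt (nxt (nxt j)))) -> c \in B j -> d \in B (nxt j) ->
  e a x -> e c d -> ~~ e a c -> ~~ e x d -> False.
Proof.
move=> aj cj dj eax ecd nac nxd.
have dj' : d \in B (nxt (nxt (nxt (nxt (nxt (nxt j)))))) by rewrite nxt5.
have [ee [f [eej fj ede eef efa]]] := LW aj dj'.
rewrite !nxt5 in eej fj.
have exc := step2 cj. have nxf := step1b fj. have nxe := step1a eej.
apply: (noC6 (a0:=x) (a1:=a) (a2:=f) (a3:=ee) (a4:=d) (a5:=c)); sol.
Qed.

Lemma N2b a b d : a \in B (nxt (nxt (nxt (nxt j)))) -> b \in B j -> d \in B (nxt j) ->
  e a b -> e x d -> ~~ e a x -> ~~ e b d -> False.
Proof.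
move=> aj bj dj eab exd nax nbd.
have dj' : d \in B (nxt (nxt (nxt (nxt (nxt (nxt j)))))) by rewrite nxt5.
have [ee [f [eej fj ede eef efa]]] := LW aj dj'.
rewrite !nxt5 in eej fj.
have exb := step2 bj. have nxf := step1b fj. have nxe := step1a eej.
apply: (noC6 (a0:=x) (a1:=d) (a2:=ee) (a3:=f) (a4:=a) (a5:=b)); sol.
Qed.

Definition Bx (i : 'I_5) : {set T} := if i == j then x |: B j else B i.

Lemma inBx u i : u \in Bx i -> (i = j /\ u = x) \/ u \in B i.
Proof.
rewrite /Bx; case: eqP => [->|_]; last by right.
by rewrite !inE => /orP [/eqP ->|]; [left|right].
Qed.
Lemma BsubBx u i : u \in B i -> u \in Bx i.
Proof. by rewrite /Bx; case: eqP => [->|_] // ui; rewrite !inE ui orbT. Qed.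
Lemma xBx : x \in Bx j.
Proof. by rewrite /Bx eqxx !inE eqxx. Qed.
Lemma cxB i : x \notin B i.
Proof. by apply: contraNN (cx cf) => xi; apply: inH xi. Qed.

Lemma Bx_disj u w i k : u \in Bx i -> w \in Bx k -> i != k -> u != w.
Proof.
move=> /inBx [[-> ->]|ui] /inBx [[-> ->]|wk] ik.
- by rewrite eqxx in ik.
- by apply: contraNneq (cxB k) => ->.
- by apply: contraNneq (cxB i) => <-.
- exact: Bdiff ui wk ik.
Qed.

Lemma Bx_cl u w i : u \in Bx i -> w \in Bx i -> u != w -> e u w.
Proof.
move=> /inBx [[-> ->]|ui] /inBx [[E ->]|wi] uw.
- by rewrite eqxx in uw.
- exact: step2.
- by subst i; rewrite esym; apply: step2.
- exact: Bcl ui wi uw.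
Qed.

Lemma Bx_anti u w i : u \in Bx i -> w \in Bx (nxt (nxt i)) -> ~~ e u w.
Proof.
move=> /inBx [[-> ->]|ui] /inBx [[E ->]|wi].
- by move: (nxt_ne2 j); rewrite E eqxx.
- exact: step1a.
- have Ei := nxt_eq2 E; subst i; rewrite esym; exact: step1b.
- exact: Banti ui wi.
Qed.

Lemma noPat a b c d i : a \in Bx i -> b \in Bx (nxt i) -> c \in Bx (nxt i) ->
  d \in Bx (nxt (nxt i)) -> b != c -> e a b -> e c d -> ~~ e a c -> ~~ e b d -> False.
Proof.
move=> ai bi ci di bc eab ecd nac nbd.
case: (inBx ai) => [[Ei Ea]|ai'].
  subst i a.
  case: (inBx bi) => [[E _]|bi']; first by move: (nxt_ne1 j); rewrite E eqxx.
  case: (inBx ci) => [[E _]|ci']; first by move: (nxt_ne1 j); rewrite E eqxx.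
  case: (inBx di) => [[E _]|di']; first by move: (nxt_ne2 j); rewrite E eqxx.
  exact: (N1 bi' ci' di' bc eab ecd nac nbd).
case: (inBx bi) => [[Eb Eb']|bi'].
  subst b; have Ei := nxt_eq1 Eb; subst i; rewrite ?nxt5 in ai' ci di.
  case: (inBx ci) => [[_ E]|ci']; first by rewrite E eqxx in bc.
  case: (inBx di) => [[E _]|di']; first by move: (nxt_ne1 j); rewrite E eqxx.
  exact: (N2a ai' ci' di' eab ecd nac nbd).
case: (inBx ci) => [[Ec Ec']|ci'].
  subst c; have Ei := nxt_eq1 Ec; subst i; rewrite ?nxt5 in ai' bi' di.
  case: (inBx di) => [[E _]|di']; first by move: (nxt_ne1 j); rewrite E eqxx.
  exact: (N2b ai' bi' di' eab ecd nac nbd).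
case: (inBx di) => [[Ed Ed']|di'].
  subst d; have Ei := nxt_eq2 Ed; subst i; rewrite ?nxt5 in ai' bi' ci'.
  exact: (N1' ai' bi' ci' bc eab ecd nac nbd).
by move: (Bnice ai' bi' ci' di' bc eab ecd); rewrite (negbTE nac) (negbTE nbd).
Qed.

Lemma Bx_nice : nice_blowup e Bx.
Proof.
split; [|split; [|split; [|split; [|split]]]].
- move=> i k ik; rewrite -setI_eq0; apply/eqP/setP => u; rewrite !inE.
  apply/negP => /andP [ui uk].
  by move: (Bx_disj ui uk ik); rewrite eqxx.
- by move=> i; apply: cliqueI => u w; apply: Bx_cl.
- move=> i; have [u ui] := Bne i; apply/set0Pn; exists u; exact: BsubBx.
- case: cv => k0 k1 k2 k3 k4 _ _ _ _ _.
  move=> i u /inBx [[-> ->]|ui]; split.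
  + by exists v4; rewrite // prvE; apply: BsubBx.
  + by exists v1; rewrite //; apply: BsubBx.
  + by have [w wi ew] := BnbP ui; exists w => //; apply: BsubBx.
  + by have [w wi ew] := BnbN ui; exists w => //; apply: BsubBx.
- by move=> i u w; apply: Bx_anti.
- move=> i a b c d ai bi ci di bc iso.
  have dab := Bx_disj ai bi (nxt_ne1 _).
  have dac := Bx_disj ai ci (nxt_ne1 _).
  have dad := Bx_disj ai di (nxt_ne2 _).
  have dbd := Bx_disj bi di (nxt_ne1 _).
  have dcd := Bx_disj ci di (nxt_ne1 _).
  have ebc := Bx_cl bi ci bc.
  have nad := Bx_anti ai di.
  case/orP: (iso_P4 dab dac dad bc dbd dcd iso ebc nad).
  + by case/andP => /andP [/andP [eab ecd] nac] nbd; apply: (noPat ai bi ci di bc eab ecd nac nbd).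
  + case/andP => /andP [/andP [eac ebd] nab] ncd.
    by apply: (noPat ai ci bi di (mu' bc) eac ebd nab ncd).
Qed.

Lemma addable : False.
Proof.
apply: mx; exists Bx; split; first exact: Bx_nice.
apply/properP; split.
- by apply/subsetP => u /bigcupP [i _ ui]; apply/bigcupP; exists i => //; apply: BsubBx.
- exists x; last exact: (cx cf).
  by apply/bigcupP; exists j => //; apply: xBx.
Qed.

End Addable.

Lemma crossAdj x y z k h1 h2 : cfgB x y z -> h1 \in B k -> h2 \in B (nxt k) ->
  e x h1 -> e y h2 -> e h1 h2 -> False.
Proof.
move=> cf h1k h2k xh1 yh2 e12.
have [c2 [c3 [c4 C]]] := C5thru' h1k h2k e12.
case/orP: (TLc cf C xh1 yh2) => /andP [/andP [p q] r].
- have C' := C5rot (C5rot (C5rot (C5rot C))).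
  exact: (addable cf C' q p xh1 yh2 r).
- have C' := C5rot (C5rot C).
  exact: (addable (cfgB_sym cf) C' yh2 q r p xh1).
Qed.

Lemma sideNbr x y z k h : cfgB x y z -> h \in B k -> e x h ->
  exists2 u, e x u && e u h & (u \in B (nxt k)) || (u \in B (nxt (nxt (nxt (nxt k))))).
Proof.
move=> cf hk xh; have [n1 n1k ehn] := BnbN hk.
have [c2 [c3 [c4 C]]] := C5thru' hk n1k ehn.
case: (boolP (e x n1)) => [xn|nxn]; first by exists n1; rewrite ?xn ?n1k // esym.
case: (boolP (e x c4)) => [xc|nxc]; last by case: (TLa cf C xh nxn nxc).
by exists c4; rewrite ?xc ?(ck4 C) ?orbT ?(ce40 C).
Qed.

Lemma caseB x y z h1 h2 : cfgB x y z -> h1 \in H -> h2 \in H ->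
  e x h1 -> e y h2 -> e h1 h2 -> False.
Proof.
move=> cf /HP [k1 h1k] /HP [k2 h2k] xh1 yh2 e12.
case/orP: (five_cases k1 k2) => [/eqP E|/orP [/eqP E|/orP [/eqP E|/orP [/eqP E| /eqP E]]]];
  subst k2.
- have nco := nco cf.
  have d12 : h1 != h2.
    by apply: contraTneq xh1 => ->; apply: contraNN (nco _ (inH h2k)) => ->.
  have [u /andP [xu uh] uk] := sideNbr cf h1k xh1.
  have [v /andP [yv vh] vk] := sideNbr (cfgB_sym cf) h2k yh2.
  have uH : u \in H by case/orP: uk => /inH.
  have vH : v \in H by case/orP: vk => /inH.
  have duv : u != v.
    by apply: contraTneq xu => ->; apply: contraNN (nco _ vH) => ->.
  case/orP: uk => uk; case/orP: vk => vk.
  + case: (boolP (e u h2)) => [uh2|nuh2].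
      by apply: (crossAdj (cfgB_sym cf) h2k uk yh2 xu); rewrite esym.
    case: (boolP (e h1 v)) => [h1v|nh1v]; first exact: (crossAdj cf h1k vk xh1 yv h1v).
    have euv := Bcl uk vk duv.
    apply: (noC4 (a0:=h1) (a1:=u) (a2:=v) (a3:=h2)); sol.
  + case: (boolP (e u h2)) => [uh2|nuh2].
      by apply: (crossAdj (cfgB_sym cf) h2k uk yh2 xu); rewrite esym.
    have h1k' : h1 \in B (nxt (nxt (nxt (nxt (nxt k1))))) by rewrite nxt5.
    case: (boolP (e v h1)) => [vh1|nvh1]; first exact: (crossAdj (cfgB_sym cf) vk h1k' yv xh1 vh1).
    have h2k' : h2 \in B (nxt (nxt (nxt (nxt (nxt k1))))) by rewrite nxt5.
    have uk' : u \in B (nxt (nxt (nxt (nxt (nxt (nxt k1)))))) by rewrite nxt5.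
    have := Bnice vk h2k' h1k' uk' (mu' d12) vh; rewrite esym uh => /(_ isT).
    by rewrite (negbTE nvh1) /= esym (negbTE nuh2).
  + have h2k' : h2 \in B (nxt (nxt (nxt (nxt (nxt k1))))) by rewrite nxt5.
    case: (boolP (e u h2)) => [uh2|nuh2]; first exact: (crossAdj cf uk h2k' xu yh2 uh2).
    case: (boolP (e h1 v)) => [h1v|nh1v]; first exact: (crossAdj cf h1k vk xh1 yv h1v).
    have h1k' : h1 \in B (nxt (nxt (nxt (nxt (nxt k1))))) by rewrite nxt5.
    have vk' : v \in B (nxt (nxt (nxt (nxt (nxt (nxt k1)))))) by rewrite nxt5.
    have := Bnice uk h1k' h2k' vk' d12 uh; rewrite esym vh => /(_ isT).
    by rewrite (negbTE nh1v) (negbTE nuh2).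
  + have h2k' : h2 \in B (nxt (nxt (nxt (nxt (nxt k1))))) by rewrite nxt5.
    case: (boolP (e u h2)) => [uh2|nuh2]; first exact: (crossAdj cf uk h2k' xu yh2 uh2).
    have h1k' : h1 \in B (nxt (nxt (nxt (nxt (nxt k1))))) by rewrite nxt5.
    case: (boolP (e v h1)) => [vh1|nvh1]; first exact: (crossAdj (cfgB_sym cf) vk h1k' yv xh1 vh1).
    have euv := Bcl uk vk duv.
    apply: (noC4 (a0:=h1) (a1:=u) (a2:=v) (a3:=h2)); sol.
- exact: (crossAdj cf h1k h2k xh1 yh2 e12).
- by move: (Banti h1k h2k); rewrite e12.
- by move: (Banti3 h1k h2k); rewrite e12.
- have h1k' : h1 \in B (nxt (nxt (nxt (nxt (nxt k1))))) by rewrite nxt5.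
  by apply: (crossAdj (cfgB_sym cf) h2k h1k' yh2 xh1); rewrite esym.
Qed.

Lemma caseA x y f1 f2 h : x \notin H -> y \notin H -> f1 \notin H -> f2 \notin H ->
  (forall u, u \in H -> ~~ e f1 u) -> (forall u, u \in H -> ~~ e f2 u) ->
  e x f1 -> e f1 f2 -> e f2 y -> ~~ e x f2 -> ~~ e x y -> ~~ e f1 y -> x != y ->
  h \in H -> e x h -> e y h -> False.
Proof.
move=> cx cy cf1 cf2 f1H f2H ex1 e12 e2y nx2 nxy n1y dxy /HP [k hk] xh yh.
have [n1 n1k ehn] := BnbN hk.
have [c2 [c3 [c4 [k0 k1 k2 k3 k4 e01 e12' e23 e34 e40]]]] := C5thru' hk n1k ehn.
have := CAcomp; rewrite lallE => /allP /(_ _ (@mem_bits 4 [:: e x n1; e x c2; e x c3; e x c4] erefl)).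
rewrite lallE => /allP /(_ _ (@mem_bits 4 [:: e y n1; e y c2; e y c3; e y c4] erefl)) fb.
have n02 := Banti k0 k2. have n13 := Banti k1 k3. have n24 := Banti k2 k4.
have n30 := Banti3 k0 k3. have n41 := Banti3 k1 k4.
have a0 := f1H _ (inH k0). have a1 := f1H _ (inH k1). have a2 := f1H _ (inH k2).
have a3 := f1H _ (inH k3). have a4 := f1H _ (inH k4).
have b0 := f2H _ (inH k0). have b1 := f2H _ (inH k1). have b2 := f2H _ (inH k2).
have b3 := f2H _ (inH k3). have b4 := f2H _ (inH k4).
have dx2 : x != f2 by apply: contraNneq nxy => ->.
have dy1 : y != f1 by apply: contraNneq nxy => ->.
apply: (@transfer _ e 9 _ [:: h; n1; c2; c3; c4; x; y; f1; f2] h erefl _ _ fb n7 n4 n6 nc7).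
- rewrite /= !inE !negb_or; repeat (apply/andP; split) => //; sol.
- move=> [|[|[|[|[|[|[|[|[|a]]]]]]]]] [|[|[|[|[|[|[|[|[|b]]]]]]]]] ha hb //=;
  rewrite /M9 /adj9 /=; ce.
Qed.

Section Walk.
Variable v : T.
Hypothesis vH : v \notin H.
Hypothesis vnb : forall u, u \in H -> ~~ e v u.

Definition A0 := [set u | (u \notin H) && [forall w, (w \in H) ==> ~~ e u w]].
Definition eA := [rel a b | e a b && (a \in A0) && (b \in A0)].
Definition Z := [set u | connect eA v u].
Definition N := [set u | (u \notin Z) && [exists w, (w \in Z) && e u w]].

Lemma vA0 : v \in A0.
Proof. by rewrite inE vH; apply/forallP => w; apply/implyP; apply: vnb. Qed.
Lemma vZ : v \in Z.
Proof. by rewrite inE connect0. Qed.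

Lemma lastA0 a p : a \in A0 -> path eA a p -> last a p \in A0.
Proof. by elim: p a => //= b p IH a aA /andP [/andP [/andP [_ _] bA] pth]; apply: IH. Qed.

Lemma ZA0 u : u \in Z -> u \in A0.
Proof. by rewrite inE => /connectP [p pth ->]; apply: lastA0 vA0 pth. Qed.
Lemma ZnotH u : u \in Z -> u \notin H.
Proof. by move/ZA0; rewrite inE => /andP []. Qed.
Lemma ZnH u w : u \in Z -> w \in H -> ~~ e u w.
Proof. by move/ZA0; rewrite inE => /andP [_ /forallP /(_ w) /implyP]. Qed.

Lemma eA_sym : symmetric eA.
Proof. by move=> a b /=; rewrite esym -!andbA; congr (_ && _); rewrite andbC. Qed.

Lemma NnotZ u : u \in N -> u \notin Z.
Proof. by rewrite inE => /andP []. Qed.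
Lemma NnotH u : u \in N -> u \notin H.
Proof.
rewrite inE => /andP [_ /existsP [w /andP [wZ euw]]].
by apply/negP => uH; move: (ZnH wZ uH); rewrite esym euw.
Qed.
Lemma NhasH u : u \in N -> exists2 h, h \in H & e u h.
Proof.
move=> uN; have := NnotH uN; have := uN; rewrite inE => /andP [uZ /existsP [w /andP [wZ euw]]] uH.
case: (boolP [exists h, (h \in H) && e u h]) => [/existsP [h /andP [hH euh]]|nh].
  by exists h.
exfalso; move: uZ; rewrite inE => /negP; apply.
apply: (connect_trans (y := w)); first by move: wZ; rewrite inE.
apply: connect1; rewrite /= esym euw (ZA0 wZ) /= inE uH /=.
apply/forallP => h; apply/implyP => hH; apply/negP => euh.
by move/existsP: nh; apply; exists h; rewrite hH euh.
Qed.

Lemma Zclosed a b : a \in Z -> e a b -> b \notin N -> b \in Z.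
Proof.
move=> aZ eab; rewrite inE negb_and negbK => /orP [//|/existsPn /(_ a)].
by rewrite aZ esym eab.
Qed.

Definition walk (x y : T) (f : nat -> T) (n : nat) :=
  [/\ f 0 = x, f n.+1 = y, (forall i, i <= n -> e (f i) (f i.+1)) &
      (forall i, 0 < i <= n -> f i \in Z)].

Lemma walk_exists x y : x \in N -> y \in N -> exists n f, walk x y f n.
Proof.
rewrite !inE => /andP [_ /existsP [zx /andP [zxZ exz]]] /andP [_ /existsP [zy /andP [zyZ eyz]]].
have : connect eA zx zy.
  apply: (connect_trans (y := v)); last by move: zyZ; rewrite inE.
  by rewrite (sym_connect_sym eA_sym); move: zxZ; rewrite inE.
case/connectP => p pth zyE.
pose W := zx :: p ++ [:: y].
exists (size p).+1, (fun i => nth x (x :: W) i); split => //.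
- by rewrite /W /= nth_cat ltnn subnn.
- have pW : path e x W.
    rewrite /W /= exz cat_path /= andbT -zyE esym eyz andbT.
    by apply: sub_path pth => a b /= /andP [/andP []].
  move=> i iN; move/(pathP x): pW => /(_ i); rewrite /W /= size_cat /= addn1 ltnS => /(_ iN).
  done.
- move=> [//|i] /= iN.
  have -> : nth x W i = nth x (zx :: p) i.
    by rewrite /W -cat_cons nth_cat /= iN.
  have : nth x (zx :: p) i \in zx :: p by apply: mem_nth.
  move/(path_connect pth) => cz; rewrite inE.
  apply: connect_trans cz; by move: zxZ; rewrite inE.
Qed.

Lemma walk_short x y f n i k : walk x y f n -> i.+1 < k -> k <= n.+1 -> e (f i) (f k) ->
  walk x y (fun t => if t <= i then f t else f (t + (k - i.+1))) (n - (k - i.+1)).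
Proof.
case=> f0 fn fe fz ik kn ef; split.
- by rewrite leq0n.
- have h : ((n - (k - i.+1)).+1 <= i) = false by apply/negbTE; rewrite -ltnNge; lia.
  by rewrite h (_ : (n - (k - i.+1)).+1 + (k - i.+1) = n.+1) //; lia.
- move=> t tn; case: (ltngtP t i) => [ti|ti|->].
  + have h : t.+1 <= i by lia.
    by rewrite ?(ltnW ti) ?h; apply: fe; lia.
  + have h1 : (t <= i) = false by apply/negbTE; rewrite -ltnNge.
    have h2 : (t.+1 <= i) = false by apply/negbTE; rewrite -ltnNge; lia.
    rewrite ?h1 ?h2 addSn; apply: fe; lia.
  + by rewrite ?leqnn ?ltnn (_ : i.+1 + (k - i.+1) = k) //; lia.
- move=> t /andP [t0 tn]; case: (leqP t i) => ti.
  + by apply: fz; rewrite t0 /=; lia.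
  + by apply: fz; apply/andP; split; lia.
Qed.

Ltac sol2 := first [ ce | (apply: ZnH; assumption) | (rewrite esym; apply: ZnH; assumption) | ne ].

Lemma nowalk n : forall x y f, x \in N -> y \in N -> x != y -> ~~ e x y -> walk x y f n -> False.
Proof.
elim/ltn_ind: n => n IH x y f xN yN dxy nxy W.
have chord i k : i.+1 < k -> k <= n.+1 -> ~~ e (f i) (f k).
  move=> ik kn; apply/negP => ef.
  by apply: (IH (n - (k - i.+1)) _ x y _ xN yN dxy nxy (walk_short W ik kn ef)); lia.
case: W => f0 fn fe fz.
have cx := NnotH xN. have cy := NnotH yN.
have [hx hxH xhx] := NhasH xN. have [hy hyH yhy] := NhasH yN.
case: n IH chord fn fe fz => [|[|[|[|[|n]]]]] IH chord fn fe fz.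
- by move: (fe 0 (leqnn 0)); rewrite f0 fn (negbTE nxy).
-
  have z1 : f 1 \in Z := fz 1 isT.
  have w0 : e x (f 1) by rewrite -?f0 -?fn; apply: fe.
  have w1 : e (f 1) y by rewrite -?f0 -?fn; apply: fe.
  case: (boolP [exists h, (h \in H) && e x h && e y h]) => [/existsP [h /andP [/andP [hH xh] yh]] | nco].
  { have dzh : f 1 != h by apply: contraNneq (ZnotH z1) => ->.
    apply: (noC4 (a0:=x) (a1:=(f 1)) (a2:=y) (a3:=h)); sol2. }
  have ncoP : forall h, h \in H -> ~~ (e x h && e y h).
    by move=> h hH; apply/negP => /andP [a b]; move/existsP: nco; apply; exists h; rewrite hH a b.
  case: (boolP [exists h1, exists h2, (h1 \in H) && (h2 \in H) && e x h1 && e y h2 && e h1 h2]) => [/existsP [h1 /existsP [h2 /andP [/andP [/andP [/andP [h1H h2H] xh1] yh2] e12]]] | npair].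
  { have nxh2 : ~~ e x h2 by apply/negP => a; move: (ncoP _ h2H); rewrite a yh2.
    have nyh1 : ~~ e y h1 by apply/negP => b; move: (ncoP _ h1H); rewrite xh1 b.
    have cf : cfgB x y (f 1). { constructor => //. exact: (ZnotH z1). by move=> h; apply: ZnH z1. by rewrite esym. }
    exact: (caseB cf h1H h2H xh1 yh2 e12). }
  have npairP : forall h1 h2, h1 \in H -> h2 \in H -> e x h1 -> e y h2 -> ~~ e h1 h2.
    move=> h1 h2 h1H h2H a b; apply/negP => c; move/existsP: npair; apply; exists h1; apply/existsP; exists h2.
    by rewrite h1H h2H a b c.
  case: (diam hxH hyH) => [E|exy|[m mH /andP [hxm mhy]]].
  - by subst hy; move: (ncoP _ hxH); rewrite xhx yhy.
  - by move: (npairP _ _ hxH hyH xhx yhy); rewrite exy.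
  - have nxm : ~~ e x m by apply/negP => a; move: (npairP _ _ mH hyH a yhy); rewrite mhy.
    have nym : ~~ e y m by apply/negP => b; move: (npairP _ _ hxH mH xhx b); rewrite hxm.
    have nxhy : ~~ e x hy by apply/negP => a; move: (ncoP _ hyH); rewrite a yhy.
    have nyhx : ~~ e y hx by apply/negP => b; move: (ncoP _ hxH); rewrite xhx b.
    have nhh : ~~ e hx hy := npairP _ _ hxH hyH xhx yhy.
    apply: (noC6 (a0:=x) (a1:=(f 1)) (a2:=y) (a3:=hy) (a4:=m) (a5:=hx)); sol2.
-
  have z1 : f 1 \in Z := fz 1 isT.
  have z2 : f 2 \in Z := fz 2 isT.
  have w0 : e x (f 1) by rewrite -?f0 -?fn; apply: fe.
  have w1 : e (f 1) (f 2) by rewrite -?f0 -?fn; apply: fe.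
  have w2 : e (f 2) y by rewrite -?f0 -?fn; apply: fe.
  have c0_2 : ~~ e x (f 2) by rewrite -?f0 -?fn; apply: chord.
  have c1_3 : ~~ e (f 1) y by rewrite -?f0 -?fn; apply: chord.
  case: (boolP [exists h, (h \in H) && e x h && e y h]) => [/existsP [h /andP [/andP [hH xh] yh]] | nco].
  { exact: (caseA cx cy (ZnotH z1) (ZnotH z2) (fun u hu => ZnH z1 hu) (fun u hu => ZnH z2 hu) w0 w1 w2 c0_2 nxy c1_3 dxy hH xh yh). }
  have ncoP : forall h, h \in H -> ~~ (e x h && e y h).
    by move=> h hH; apply/negP => /andP [a b]; move/existsP: nco; apply; exists h; rewrite hH a b.
  case: (boolP [exists h1, exists h2, (h1 \in H) && (h2 \in H) && e x h1 && e y h2 && e h1 h2]) => [/existsP [h1 /existsP [h2 /andP [/andP [/andP [/andP [h1H h2H] xh1] yh2] e12]]] | npair].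
  { have nxh2 : ~~ e x h2 by apply/negP => a; move: (ncoP _ h2H); rewrite a yh2.
    have nyh1 : ~~ e y h1 by apply/negP => b; move: (ncoP _ h1H); rewrite xh1 b.
    apply: (noC6 (a0:=x) (a1:=(f 1)) (a2:=(f 2)) (a3:=y) (a4:=h2) (a5:=h1)); sol2. }
  have npairP : forall h1 h2, h1 \in H -> h2 \in H -> e x h1 -> e y h2 -> ~~ e h1 h2.
    move=> h1 h2 h1H h2H a b; apply/negP => c; move/existsP: npair; apply; exists h1; apply/existsP; exists h2.
    by rewrite h1H h2H a b c.
  case: (diam hxH hyH) => [E|exy|[m mH /andP [hxm mhy]]].
  - by subst hy; move: (ncoP _ hxH); rewrite xhx yhy.
  - by move: (npairP _ _ hxH hyH xhx yhy); rewrite exy.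
  - have nxm : ~~ e x m by apply/negP => a; move: (npairP _ _ mH hyH a yhy); rewrite mhy.
    have nym : ~~ e y m by apply/negP => b; move: (npairP _ _ hxH mH xhx b); rewrite hxm.
    have nxhy : ~~ e x hy by apply/negP => a; move: (ncoP _ hyH); rewrite a yhy.
    have nyhx : ~~ e y hx by apply/negP => b; move: (ncoP _ hxH); rewrite xhx b.
    have nhh : ~~ e hx hy := npairP _ _ hxH hyH xhx yhy.
    apply: (noC7 (a0:=x) (a1:=(f 1)) (a2:=(f 2)) (a3:=y) (a4:=hy) (a5:=m) (a6:=hx)); sol2.
-
  have z1 : f 1 \in Z := fz 1 isT.
  have z2 : f 2 \in Z := fz 2 isT.
  have z3 : f 3 \in Z := fz 3 isT.
  have w0 : e x (f 1) by rewrite -?f0 -?fn; apply: fe.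
  have w1 : e (f 1) (f 2) by rewrite -?f0 -?fn; apply: fe.
  have w2 : e (f 2) (f 3) by rewrite -?f0 -?fn; apply: fe.
  have w3 : e (f 3) y by rewrite -?f0 -?fn; apply: fe.
  have c0_2 : ~~ e x (f 2) by rewrite -?f0 -?fn; apply: chord.
  have c0_3 : ~~ e x (f 3) by rewrite -?f0 -?fn; apply: chord.
  have c1_3 : ~~ e (f 1) (f 3) by rewrite -?f0 -?fn; apply: chord.
  have c1_4 : ~~ e (f 1) y by rewrite -?f0 -?fn; apply: chord.
  have c2_4 : ~~ e (f 2) y by rewrite -?f0 -?fn; apply: chord.
  case: (boolP [exists h, (h \in H) && e x h && e y h]) => [/existsP [h /andP [/andP [hH xh] yh]] | nco].
  { apply: (noC6 (a0:=x) (a1:=(f 1)) (a2:=(f 2)) (a3:=(f 3)) (a4:=y) (a5:=h)); sol2. }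
  have ncoP : forall h, h \in H -> ~~ (e x h && e y h).
    by move=> h hH; apply/negP => /andP [a b]; move/existsP: nco; apply; exists h; rewrite hH a b.
  case: (boolP [exists h1, exists h2, (h1 \in H) && (h2 \in H) && e x h1 && e y h2 && e h1 h2]) => [/existsP [h1 /existsP [h2 /andP [/andP [/andP [/andP [h1H h2H] xh1] yh2] e12]]] | npair].
  { have nxh2 : ~~ e x h2 by apply/negP => a; move: (ncoP _ h2H); rewrite a yh2.
    have nyh1 : ~~ e y h1 by apply/negP => b; move: (ncoP _ h1H); rewrite xh1 b.
    apply: (noC7 (a0:=x) (a1:=(f 1)) (a2:=(f 2)) (a3:=(f 3)) (a4:=y) (a5:=h2) (a6:=h1)); sol2. }
  have npairP : forall h1 h2, h1 \in H -> h2 \in H -> e x h1 -> e y h2 -> ~~ e h1 h2.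
    move=> h1 h2 h1H h2H a b; apply/negP => c; move/existsP: npair; apply; exists h1; apply/existsP; exists h2.
    by rewrite h1H h2H a b c.
  case: (diam hxH hyH) => [E|exy|[m mH /andP [hxm mhy]]].
  - by subst hy; move: (ncoP _ hxH); rewrite xhx yhy.
  - by move: (npairP _ _ hxH hyH xhx yhy); rewrite exy.
  - have nxm : ~~ e x m by apply/negP => a; move: (npairP _ _ mH hyH a yhy); rewrite mhy.
    have nym : ~~ e y m by apply/negP => b; move: (npairP _ _ hxH mH xhx b); rewrite hxm.
    have nxhy : ~~ e x hy by apply/negP => a; move: (ncoP _ hyH); rewrite a yhy.
    have nyhx : ~~ e y hx by apply/negP => b; move: (ncoP _ hxH); rewrite xhx b.
    have nhh : ~~ e hx hy := npairP _ _ hxH hyH xhx yhy.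
    apply: (noP7 (a0:=(f 1)) (a1:=(f 2)) (a2:=(f 3)) (a3:=y) (a4:=hy) (a5:=m) (a6:=hx)); sol2.
-
  have z1 : f 1 \in Z := fz 1 isT.
  have z2 : f 2 \in Z := fz 2 isT.
  have z3 : f 3 \in Z := fz 3 isT.
  have z4 : f 4 \in Z := fz 4 isT.
  have w0 : e x (f 1) by rewrite -?f0 -?fn; apply: fe.
  have w1 : e (f 1) (f 2) by rewrite -?f0 -?fn; apply: fe.
  have w2 : e (f 2) (f 3) by rewrite -?f0 -?fn; apply: fe.
  have w3 : e (f 3) (f 4) by rewrite -?f0 -?fn; apply: fe.
  have w4 : e (f 4) y by rewrite -?f0 -?fn; apply: fe.
  have c0_2 : ~~ e x (f 2) by rewrite -?f0 -?fn; apply: chord.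
  have c0_3 : ~~ e x (f 3) by rewrite -?f0 -?fn; apply: chord.
  have c0_4 : ~~ e x (f 4) by rewrite -?f0 -?fn; apply: chord.
  have c1_3 : ~~ e (f 1) (f 3) by rewrite -?f0 -?fn; apply: chord.
  have c1_4 : ~~ e (f 1) (f 4) by rewrite -?f0 -?fn; apply: chord.
  have c1_5 : ~~ e (f 1) y by rewrite -?f0 -?fn; apply: chord.
  have c2_4 : ~~ e (f 2) (f 4) by rewrite -?f0 -?fn; apply: chord.
  have c2_5 : ~~ e (f 2) y by rewrite -?f0 -?fn; apply: chord.
  have c3_5 : ~~ e (f 3) y by rewrite -?f0 -?fn; apply: chord.
  case: (boolP [exists h, (h \in H) && e x h && e y h]) => [/existsP [h /andP [/andP [hH xh] yh]] | nco].
  { apply: (noC7 (a0:=x) (a1:=(f 1)) (a2:=(f 2)) (a3:=(f 3)) (a4:=(f 4)) (a5:=y) (a6:=h)); sol2. }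
  have ncoP : forall h, h \in H -> ~~ (e x h && e y h).
    by move=> h hH; apply/negP => /andP [a b]; move/existsP: nco; apply; exists h; rewrite hH a b.
  case: (boolP [exists h1, exists h2, (h1 \in H) && (h2 \in H) && e x h1 && e y h2 && e h1 h2]) => [/existsP [h1 /existsP [h2 /andP [/andP [/andP [/andP [h1H h2H] xh1] yh2] e12]]] | npair].
  { have nxh2 : ~~ e x h2 by apply/negP => a; move: (ncoP _ h2H); rewrite a yh2.
    have nyh1 : ~~ e y h1 by apply/negP => b; move: (ncoP _ h1H); rewrite xh1 b.
    apply: (noP7 (a0:=(f 1)) (a1:=(f 2)) (a2:=(f 3)) (a3:=(f 4)) (a4:=y) (a5:=h2) (a6:=h1)); sol2. }
  have npairP : forall h1 h2, h1 \in H -> h2 \in H -> e x h1 -> e y h2 -> ~~ e h1 h2.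
    move=> h1 h2 h1H h2H a b; apply/negP => c; move/existsP: npair; apply; exists h1; apply/existsP; exists h2.
    by rewrite h1H h2H a b c.
  case: (diam hxH hyH) => [E|exy|[m mH /andP [hxm mhy]]].
  - by subst hy; move: (ncoP _ hxH); rewrite xhx yhy.
  - by move: (npairP _ _ hxH hyH xhx yhy); rewrite exy.
  - have nxm : ~~ e x m by apply/negP => a; move: (npairP _ _ mH hyH a yhy); rewrite mhy.
    have nym : ~~ e y m by apply/negP => b; move: (npairP _ _ hxH mH xhx b); rewrite hxm.
    have nxhy : ~~ e x hy by apply/negP => a; move: (ncoP _ hyH); rewrite a yhy.
    have nyhx : ~~ e y hx by apply/negP => b; move: (ncoP _ hxH); rewrite xhx b.
    have nhh : ~~ e hx hy := npairP _ _ hxH hyH xhx yhy.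
    apply: (noP7 (a0:=(f 1)) (a1:=(f 2)) (a2:=(f 3)) (a3:=(f 4)) (a4:=y) (a5:=hy) (a6:=m)); sol2.
- apply: (noP7 (a0:=f 0) (a1:=f 1) (a2:=f 2) (a3:=f 3) (a4:=f 4) (a5:=f 5) (a6:=f 6));
  first [by apply: fe; rewrite ?ltnS | by apply: chord; rewrite ?ltnS].
Qed.

Lemma N_clique : is_clique e N.
Proof.
apply: cliqueI => u w uN wN uw; case: (boolP (e u w)) => // nuw; exfalso.
have [n [f W]] := walk_exists uN wN.
exact: (nowalk uN wN uw nuw W).
Qed.

Lemma lastZ a p : a \in Z ->
  path [rel x y | e x y && (x \notin N) && (y \notin N)] a p -> last a p \in Z.
Proof.
elim: p a => //= b p IH a aZ /andP [/andP [/andP [eab _] bN] pth].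
exact: (IH _ (Zclosed aZ eab bN) pth).
Qed.

Lemma N_cutset : clique_cutset e N.
Proof.
split; first exact: N_clique.
have [b0 b0B] := Bne ord0.
exists v, b0; split.
- by rewrite inE vZ.
- by apply/negP => /NnotH; rewrite (inH b0B).
- apply/negP => /connectP [p pth E].
  by move: (ZnotH (lastZ vZ pth)); rewrite -E (inH b0B).
Qed.

End Walk.

End Main.

Theorem lemma5p5 (T : finType) (e : rel T) (B : 'I_5 -> {set T}) :
  simple_graph e ->
  basic e ->
  ~ has_induced e (@path_adj 7) ->
  ~ has_induced e (@cycle_adj 4) ->
  ~ has_induced e (@cycle_adj 6) ->
  ~ has_induced e (@cycle_adj 7) ->
  maximal_nice_blowup e B ->
  forall v : T, v \notin blowup_vertices B ->
    exists2 u, u \in blowup_vertices B & e v u.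
Proof.
move=> [irr esym] [_ _ _ ncc _] n7 n4 n6 nc7 [nb mx] v vH.
case: (boolP [exists u, (u \in blowup_vertices B) && e v u]) => [/existsP [u /andP [uH evu]]|nex].
  by exists u.
exfalso; apply: ncc; eexists.
apply: (N_cutset irr esym nb n7 n4 n6 nc7 mx vH).
move=> u uH; apply/negP => evu; move/existsP: nex; apply; exists u; by rewrite uH evu.
Qed.
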